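(* Let $n\ge2$ and let $U^+$ be the subalgebra of $U_{r,s}(\mathfrak{so}_{2n+1})$ generated by $e_1,\dots,e_n$, with root vectors as in the context. Then in $U^+$: (1) $e_l\mathcal E_{i,j}=\mathcal E_{i,j}e_l$ for $i<l<j\le n$; (2) $\mathcal E_{i,l}\mathcal E_{l,j}-(rs)^2\mathcal E_{l,j}\mathcal E_{i,l}=(s^2-r^2)e_l\mathcal E_{i,j}$ for $i<l<j\le n$; (3) $\mathcal E_{i,j}\mathcal E_{k,l}=\mathcal E_{k,l}\mathcal E_{i,j}$ for $i<k\le l<j\le n$; (4) $\mathcal E_{i,j}\mathcal E_{l,j}=s^2\mathcal E_{l,j}\mathcal E_{i,j}$ for $i<l\le j<n$; (5) $\mathcal E_{i,l}\mathcal E_{i,j}=s^2\mathcal E_{i,j}\mathcal E_{i,l}$ for $i\le l<j\le n$; (6) $e_l\mathcal E_{i,j'}=\mathcal E_{i,j'}e_l$ for $i<l$, $l+1<j\le n$; (7) $\mathcal E_{i,l}\mathcal E_{l,j'}-(rs)^2\mathcal E_{l,j'}\mathcal E_{i,l}=(s^2-r^2)e_l\mathcal E_{i,j'}$ for $i<l$, $l+1<j\le n$; (8) $\mathcal E_{i,j'}\mathcal E_{k,l}=\mathcal E_{k,l}\mathcal E_{i,j'}$ for $i<k\le l$, $l+1<j\le n$; (9) $\mathcal E_{i,l}\mathcal E_{i,j'}=s^2\mathcal E_{i,j'}\mathcal E_{i,l}$ for $i\le l$, $l+1<j\le n$.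
   Context: Let $r,s\in\mathbb C^*$ with $r^3\ne s^3$, $r^4\ne s^4$, $\mathbb K=\mathbb Q(r,s)$. $U_{r,s}(\mathfrak{so}_{2n+1})$ is the $\mathbb K$-algebra generated by $e_i,f_i,\omega_i^{\pm1},\omega_i'^{\pm1}$ ($1\le i\le n$) with: $\omega$'s commute, invertible; $\omega_je_i\omega_j^{-1}=\langle\omega_i',\omega_j\rangle e_i$, $\omega_jf_i\omega_j^{-1}=\langle\omega_i',\omega_j\rangle^{-1}f_i$, $\omega_j'e_i\omega_j'^{-1}=\langle\omega_j',\omega_i\rangle^{-1}e_i$, $\omega_j'f_i\omega_j'^{-1}=\langle\omega_j',\omega_i\rangle f_i$, where $\langle\omega_i',\omega_i\rangle=r^2s^{-2}$ ($i<n$), $\langle\omega_n',\omega_n\rangle=rs^{-1}$, $\langle\omega_i',\omega_{i+1}\rangle=r^{-2}$, $\langle\omega_{i+1}',\omega_i\rangle=s^2$ ($i<n$), others $1$; $e_if_j-f_je_i=\delta_{ij}(\omega_i-\omega_i')/(r_i-s_i)$ ($r_i=r^2,s_i=s^2$ for $i<n$; $r_n=r,s_n=s$); Serre relations $(\mathrm{ad}_le_i)^{1-a_{ij}}(e_j)=0=(\mathrm{ad}_rf_i)^{1-a_{ij}}(f_j)$, $i\ne j$, with $(a_{ij})$ the $B_n$ Cartan matrix ($a_{ii}=2$, $a_{i,i+1}=a_{i+1,i}=-1$ for $i\le n-2$, $a_{n-1,n}=-1$, $a_{n,n-1}=-2$, else $0$), $\mathrm{ad}_l(a)(b)=\sum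 a_{(1)}bS(a_{(2)})$, $\mathrm{ad}_r(a)(b)=\sum S(a_{(1)})ba_{(2)}$, for the Hopf structure $\Delta(\omega)=\omega\otimes\omega$, $\Delta(e_i)=e_i\otimes1+\omega_i\otimes e_i$, $\Delta(f_i)=1\otimes f_i+f_i\otimes\omega_i'$, $S(e_i)=-\omega_i^{-1}e_i$, $S(f_i)=-f_i\omega_i'^{-1}$. Root vectors: $\mathcal E_{i,i}=e_i$, $\mathcal E_{i,j}=e_i\mathcal E_{i+1,j}-r^2\mathcal E_{i+1,j}e_i$ ($1\le i<j\le n$), $\mathcal E_{i,n'}=\mathcal E_{i,n}e_n-rs\,e_n\mathcal E_{i,n}$ ($i\le n-1$), $\mathcal E_{i,j'}=\mathcal E_{i,(j+1)'}e_j-s^{-2}e_j\mathcal E_{i,(j+1)'}$ ($1\le i<j\le n-1$). *)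

(* Defs.v *)
From HB Require Import structures.
From mathcomp Require Import all_boot all_order all_algebra.
From mathcomp Require Import reals complex.
Set Implicit Arguments. Unset Strict Implicit. Unset Printing Implicit Defensive.
Import Order.TTheory GRing.Theory Num.Theory.
Local Open Scope ring_scope.

Section TwoParam.
Variable (F : fieldType) (A : algType F).
Variables (n : nat) (r s : F).

(* <omega'_i, omega_j> for the B_n two-parameter datum, indices 1..n *)
Definition pairing (i j : nat) : F :=
  if (i == j) then (if i == n then r / s else r ^+ 2 / s ^+ 2)
  else if (j == i.+1) && (i < n)%N then (r ^+ 2)^-1
  else if (i == j.+1) && (j < n)%N then s ^+ 2
  else 1.

Definition rsdiff (i : nat) : F := if i == n then r - s else r ^+ 2 - s ^+ 2.

(* 1 - a_ij for i <> j, B_n Cartan matrix (indices 1..n) *)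
Definition serre_exp (i j : nat) : nat :=
  if j == i.+1 then 2%N
  else if i == j.+1 then (if i == n then 3%N else 2%N)
  else 1%N.

(* ad_l(e_i)(b) = e_i b S(1) + omega_i b S(e_i) = e_i b - omega_i b omega_i^{-1} e_i *)
Definition adl (ei wi wiinv b : A) : A := ei * b - wi * b * wiinv * ei.
(* ad_r(f_i)(b) = S(1) b f_i + S(f_i) b omega'_i = b f_i - f_i omega'_i^{-1} b omega'_i *)
Definition adr (fi wi' wi'inv b : A) : A := b * fi - fi * wi'inv * b * wi'.

Definition Urs_relations (e f w winv w' w'inv : nat -> A) : Prop :=
  [/\ (forall i, (1 <= i <= n)%N ->
        [/\ w i * winv i = 1, winv i * w i = 1, w' i * w'inv i = 1 & w'inv i * w' i = 1]),
      (forall i j, (1 <= i <= n)%N -> (1 <= j <= n)%N ->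
        [/\ w i * w j = w j * w i, w' i * w' j = w' j * w' i & w i * w' j = w' j * w i]),
      (forall i j, (1 <= i <= n)%N -> (1 <= j <= n)%N ->
        [/\ w j * e i * winv j = pairing i j *: e i,
            w j * f i * winv j = (pairing i j)^-1 *: f i,
            w' j * e i * w'inv j = (pairing j i)^-1 *: e i &
            w' j * f i * w'inv j = pairing j i *: f i]),
      (forall i j, (1 <= i <= n)%N -> (1 <= j <= n)%N ->
        e i * f j - f j * e i = if i == j then (rsdiff i)^-1 *: (w i - w' i) else 0) &
      (forall i j, (1 <= i <= n)%N -> (1 <= j <= n)%N -> i != j ->
        iter (serre_exp i j) (adl (e i) (w i) (winv i)) (e j) = 0 /\
        iter (serre_exp i j) (adr (f i) (w' i) (w'inv i)) (f j) = 0)].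

Fixpoint Eaux (e : nat -> A) (k i : nat) : A :=
  match k with
  | 0 => e i
  | k'.+1 => e i * Eaux e k' i.+1 - r ^+ 2 *: (Eaux e k' i.+1 * e i)
  end.
Definition E (e : nat -> A) (i j : nat) : A := Eaux e (j - i) i.

(* E_{i,n'} = E_{i,n} e_n - rs e_n E_{i,n};
   E_{i,j'} = E_{i,(j+1)'} e_j - s^{-2} e_j E_{i,(j+1)'}.  Recursion on k = n - j. *)
Fixpoint E'aux (e : nat -> A) (k i : nat) : A :=
  match k with
  | 0 => E e i n * e n - (r * s) *: (e n * E e i n)
  | k'.+1 => E'aux e k' i * e (n - k'.+1)%N
             - (s ^+ 2)^-1 *: (e (n - k'.+1)%N * E'aux e k' i)
  end.
Definition E' (e : nat -> A) (i j : nat) : A := E'aux e (n - j) i.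

End TwoParam.

(* Main.v *)
Require Import Defs.
From HB Require Import structures.
From mathcomp Require Import all_boot all_order all_algebra.
From mathcomp Require Import reals complex.
From mathcomp Require Import ring zify.
Import Order.TTheory GRing.Theory Num.Theory.
Local Open Scope ring_scope.
Set Implicit Arguments. Unset Strict Implicit. Unset Printing Implicit Defensive.

Section NC.
Variables (F : fieldType) (A : algType F).
Inductive nc : Type := NAt of nat | N0 | N1 | NAdd of nc & nc | NOpp of nc
 | NMul of nc & nc | NSc of F & nc.
Variable env : seq A.
Fixpoint ev t : A := match t with NAt k => nth 0 env k | N0 => 0 | N1 => 1
 | NAdd a b => ev a + ev b | NOpp a => - ev a | NMul a b => ev a * ev b
 | NSc c a => c *: ev a end.
Fixpoint evw (w : seq nat) : A := match w with [::] => 1 | k :: w' => nth 0 env k * evw w' end.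
Fixpoint evl (l : seq (F * seq nat)) : A := match l with [::] => 0
 | p :: l' => p.1 *: evw p.2 + evl l' end.
Fixpoint wcat (w1 w2 : seq nat) := match w1 with [::] => w2 | k :: w => k :: wcat w w2 end.
Fixpoint lcat (l1 l2 : seq (F * seq nat)) := match l1 with [::] => l2 | p :: l => p :: lcat l l2 end.
Fixpoint lopp (l : seq (F * seq nat)) := match l with [::] => [::] | p :: l' => (- p.1, p.2) :: lopp l' end.
Fixpoint lsc c (l : seq (F * seq nat)) := match l with [::] => [::] | p :: l' => (c * p.1, p.2) :: lsc c l' end.
Fixpoint mul1 (p : F * seq nat) l := match l with [::] => [::]
 | q :: l' => (p.1 * q.1, wcat p.2 q.2) :: mul1 p l' end.
Fixpoint mulL l1 l2 := match l1 with [::] => [::] | p :: l => lcat (mul1 p l2) (mulL l l2) end.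
Fixpoint nrm t := match t with NAt k => [:: (1, [:: k])] | N0 => [::] | N1 => [:: (1, [::])]
 | NAdd a b => lcat (nrm a) (nrm b) | NOpp a => lopp (nrm a) | NSc c a => lsc c (nrm a)
 | NMul a b => mulL (nrm a) (nrm b) end.
Fixpoint weq (w1 w2 : seq nat) : bool := match w1, w2 with [::], [::] => true
 | a :: u, b :: v => if Nat.eqb a b then weq u v else false | _, _ => false end.
Fixpoint ins (p : F * seq nat) l := match l with [::] => [:: p]
 | q :: l' => if weq p.2 q.2 then (p.1 + q.1, q.2) :: l' else q :: ins p l' end.
Fixpoint coll l := match l with [::] => [::] | p :: l' => ins p (coll l') end.
Fixpoint allz (l : seq (F * seq nat)) : Prop := match l with [::] => True | p :: l' => p.1 = 0 /\ allz l' end.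

Lemma weqP w1 w2 : weq w1 w2 = true -> w1 = w2.
Proof.
elim: w1 w2 => [|a u IH] [|b v] //=.
case E: (Nat.eqb a b) => // /IH ->. by move/PeanoNat.Nat.eqb_eq: E => ->.
Qed.
Lemma evw_cat w1 w2 : evw (wcat w1 w2) = evw w1 * evw w2.
Proof. by elim: w1 => [|k w IH] /=; rewrite ?mul1r // IH mulrA. Qed.
Lemma evl_cat l1 l2 : evl (lcat l1 l2) = evl l1 + evl l2.
Proof. by elim: l1 => [|p l IH] /=; rewrite ?add0r // IH addrA. Qed.
Lemma evl_opp l : evl (lopp l) = - evl l.
Proof. by elim: l => [|p l IH] /=; rewrite ?oppr0 // IH opprD scaleNr. Qed.
Lemma evl_sc c l : evl (lsc c l) = c *: evl l.
Proof. elim: l => [|p l IH] /=; by rewrite ?scaler0 // IH scalerDr scalerA. Qed.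
Lemma evl_mul1 p l : evl (mul1 p l) = (p.1 *: evw p.2) * evl l.
Proof.
elim: l => [|q l IH] /=; first by rewrite mulr0.
rewrite IH mulrDr evw_cat; congr (_ + _).
by rewrite -scalerAr -scalerAl scalerA mulrC.
Qed.
Lemma evl_mul l1 l2 : evl (mulL l1 l2) = evl l1 * evl l2.
Proof. by elim: l1 => [|p l IH] /=; rewrite ?mul0r // evl_cat evl_mul1 IH mulrDl. Qed.
Lemma evl_nrm t : ev t = evl (nrm t).
Proof.
elim: t => [k|||a IHa b IHb|a IH|a IHa b IHb|c a IH] /=.
- by rewrite scale1r mulr1 addr0.
- by [].
- by rewrite scale1r addr0.
- by rewrite evl_cat IHa IHb.
- by rewrite evl_opp IH.
- by rewrite evl_mul IHa IHb.
- by rewrite evl_sc IH.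
Qed.
Lemma evl_ins p l : evl (ins p l) = p.1 *: evw p.2 + evl l.
Proof.
elim: l => [|q l IH] /=; first by [].
case E: (weq p.2 q.2) => /=.
  by rewrite (weqP E) scalerDl addrA.
by rewrite IH addrCA.
Qed.
Lemma evl_coll l : evl (coll l) = evl l.
Proof. by elim: l => [|p l IH] //=; rewrite evl_ins IH. Qed.
Lemma allz_evl l : allz l -> evl l = 0.
Proof. by elim: l => [|p l IH] //= [-> /IH ->]; rewrite scale0r add0r. Qed.
Lemma nc_ok t1 t2 : allz (coll (nrm (NAdd t1 (NOpp t2)))) -> ev t1 = ev t2.
Proof.
move=> /allz_evl; rewrite evl_coll -evl_nrm /= => /eqP; rewrite subr_eq0 => /eqP.
by [].
Qed.
End NC.

Ltac find_idx x env :=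
  lazymatch env with
  | x :: _ => constr:(0%N)
  | _ :: ?l => let k := find_idx x l in constr:(k.+1)
  end.
Ltac reify F env t :=
  lazymatch t with
  | ?a + ?b => let x := reify F env a in let y := reify F env b in constr:(NAdd x y)
  | - ?a => let x := reify F env a in constr:(NOpp x)
  | ?a * ?b => let x := reify F env a in let y := reify F env b in constr:(NMul x y)
  | ?c *: ?a => let x := reify F env a in constr:(NSc c x)
  | 0 => constr:(@N0 F)
  | 1 => constr:(@N1 F)
  | _ => let k := find_idx t env in constr:(@NAt F k)
  end.
Ltac nc F env :=
  lazymatch goal with |- ?x = ?y =>
    let tx := reify F env x in let ty := reify F env y in
    refine (@nc_ok F _ env tx ty _);
    cbn [coll ins weq Nat.eqb nrm lcat lopp lsc mul1 mulL wcat allz fst snd]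
  end.

Section Test.
Variables (F : fieldType) (A : algType F) (a b c : A) (x y : F).
Goal (a * (b * c - x *: (c * b)) - y *: ((b * c - x *: (c * b)) * a))
  - ((a * b - y *: (b * a)) * c - x *: (c * (a * b - y *: (b * a))))
  = x *: ((c * a - a * c) * b) + y *: (b * (a * c - c * a)).
Proof. nc F [:: a; b; c]. repeat split; ring. Qed.
End Test.

Section Gen.
Variables (F : fieldType) (A : algType F).
Definition qc (x y : A) (c : F) := x * y - c *: (y * x).

Lemma certify (X Y Z : A) : Z = 0 -> X - Y = Z -> X = Y.
Proof. by move=> -> /eqP; rewrite subr_eq0 => /eqP. Qed.

Ltac z0 := rewrite ?(mul0r, mulr0, scaler0, addr0, add0r, oppr0, subr0).

Lemma qcL x a b c al be : x*a = al*:(a*x) -> x*b = be*:(b*x) ->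
  x * qc a b c = (al*be) *: (qc a b c * x).
Proof.
move=> /eqP; rewrite -subr_eq0 => /eqP Ha /eqP; rewrite -subr_eq0 => /eqP Hb.
apply: (certify (Z := (x*a - al*:(a*x))*b + al*:(a*(x*b - be*:(b*x)))
  - c*:((x*b - be*:(b*x))*a + be*:(b*(x*a - al*:(a*x)))))).
  by rewrite Ha Hb; z0.
rewrite /qc; nc F [:: x; a; b]; repeat split; ring.
Qed.

Lemma qcR x a b c al be : a*x = al*:(x*a) -> b*x = be*:(x*b) ->
  qc a b c * x = (al*be) *: (x * qc a b c).
Proof.
move=> /eqP; rewrite -subr_eq0 => /eqP Ha /eqP; rewrite -subr_eq0 => /eqP Hb.
apply: (certify (Z := a*(b*x - be*:(x*b)) + be*:((a*x - al*:(x*a))*b)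
  - c*:(b*(a*x - al*:(x*a)) + al*:((b*x - be*:(x*b))*a)))).
  by rewrite Ha Hb; z0.
rewrite /qc; nc F [:: x; a; b]; repeat split; ring.
Qed.

Lemma qcC x a b c : x*a = a*x -> x*b = b*x -> x * qc a b c = qc a b c * x.
Proof.
by move=> Ha Hb; rewrite (@qcL x a b c 1 1) ?mulr1 ?scale1r.
Qed.

Lemma assoc3 a b c x y : a*c = c*a -> qc a (qc b c x) y = qc (qc a b y) c x.
Proof.
move=> /eqP; rewrite -subr_eq0 => /eqP H.
apply: (certify (Z := - x *: ((a*c - c*a) * b) + y *: (b * (a*c - c*a)))).
  by rewrite H; z0.
rewrite /qc; nc F [:: a; b; c]; repeat split; ring.
Qed.

Lemma qc_lin2 u v X y c d : u*y = y*u -> v*y = y*v ->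
  u * qc X y c - d *: (qc X y c * v) = qc (u*X - d*:(X*v)) y c.
Proof.
move=> /eqP; rewrite -subr_eq0 => /eqP Hu /eqP; rewrite -subr_eq0 => /eqP Hv.
apply: (certify (Z := - c *: ((u*y - y*u) * X) + d *: (X * (v*y - y*v)))).
  by rewrite Hu Hv; z0.
rewrite /qc; nc F [:: u; v; X; y]; repeat split; ring.
Qed.

Lemma qc_mull w Z y c : w*y = y*w -> w * qc Z y c = qc (w*Z) y c.
Proof.
move=> /eqP; rewrite -subr_eq0 => /eqP Hu.
apply: (certify (Z := - c *: ((w*y - y*w)*Z))).
  by rewrite Hu; z0.
rewrite /qc; nc F [:: w; Z; y]; repeat split; ring.
Qed.

Lemma qc_scale k Z y c : qc (k *: Z) y c = k *: qc Z y c.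
Proof. rewrite /qc; nc F [:: Z; y]; repeat split; ring. Qed.
End Gen.

Section Main.
Variables (F : fieldType) (A : algType F) (n : nat) (r s : F) (e : nat -> A).
Hypotheses (hm : r^+2 + s^+2 != 0).
Hypothesis hfar : forall i j, (1 <= i)%N -> (j <= n)%N -> (i.+1 < j)%N ->
  e i * e j = e j * e i.
Hypothesis hA : forall k, (1 <= k)%N -> (k < n)%N ->
  e k * E r e k k.+1 = s^+2 *: (E r e k k.+1 * e k).
Hypothesis hB : forall k, (1 <= k)%N -> (k.+2 <= n)%N ->
  E r e k k.+1 * e k.+1 = s^+2 *: (e k.+1 * E r e k k.+1).

Local Notation Ep := (E r e).

Lemma Eii i : Ep i i = e i.
Proof. by rewrite /E subnn. Qed.

Lemma Erec i j : (i < j)%N -> Ep i j = qc (e i) (Ep i.+1 j) (r^+2).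
Proof. by move=> lt; rewrite /E (_ : (j - i = (j - i.+1).+1)%N) //; lia. Qed.

Lemma comm_Eaux x d i : (forall m, (i <= m <= i + d)%N -> x * e m = e m * x) ->
  x * Eaux r e d i = Eaux r e d i * x.
Proof.
elim: d i => [|d IH] i H /=; first by apply: H; lia.
apply: qcC; first by apply: H; lia.
by apply: IH => m hm'; apply: H; lia.
Qed.

Lemma comm_E x i j : (i <= j)%N -> (forall m, (i <= m <= j)%N -> x * e m = e m * x) ->
  x * Ep i j = Ep i j * x.
Proof. by move=> hij H; apply: comm_Eaux => m hm'; apply: H; lia. Qed.

Lemma far_E m i j : (1 <= m)%N -> (i <= j <= n)%N -> (m.+1 < i)%N -> e m * Ep i j = Ep i j * e m.
Proof. by move=> *; apply: comm_E; [lia|move=> k hk; apply: hfar; lia]. Qed.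

Lemma far_E' m i j : (1 <= i)%N -> (i <= j)%N -> (m <= n)%N -> (j.+1 < m)%N ->
  e m * Ep i j = Ep i j * e m.
Proof. by move=> *; apply: comm_E => // k hk; symmetry; apply: hfar; lia. Qed.

Lemma Eassoc i l j : (1 <= i)%N -> (i <= l)%N -> (l < j <= n)%N ->
  Ep i j = qc (Ep i l) (Ep l.+1 j) (r^+2).
Proof.
move=> h1 hil hlj; have [d hd] : exists d, l = (i + d)%N by exists (l - i)%N; lia.
subst l.
elim: d i h1 {hil} hlj => [|d IH] i h1 hlj; first by rewrite addn0 Eii Erec //; lia.
rewrite Erec; last by lia.
rewrite (IH i.+1) //; last by lia.
rewrite assoc3; last by apply: far_E; lia.
by rewrite -Erec; [rewrite addnS addSn | lia].
Qed.

Lemma B1 k : (1 <= k)%N -> (k.+2 <= n)%N -> e k.+1 * Ep k k.+2 = Ep k k.+2 * e k.+1.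
Proof.
move=> h1 h2.
have RA := hA (k:=k.+1) isT h2.
have RB := hB h1 h2.
have K := hfar (i:=k) (j:=k.+2) h1 h2 (ltnSn _).
rewrite Erec // Eii in RA; rewrite Erec // Eii in RB.
rewrite Erec // Erec // Eii.
move: RA RB K; set a := e k; set b := e k.+1; set c := e k.+2.
move=> /eqP; rewrite -subr_eq0 => /eqP RA /eqP; rewrite -subr_eq0 => /eqP RB.
move=> /eqP; rewrite -subr_eq0 => /eqP K.
apply/eqP; rewrite -subr_eq0; apply/eqP; apply: (@scalerI _ _ (r^+2 + s^+2)) => //.
rewrite scaler0.
set m := r^+2 + s^+2.
set RA' := b * qc b c (r^+2) - s^+2 *: (qc b c (r^+2) * b).
set RB' := qc a b (r^+2) * b - s^+2 *: (b * qc a b (r^+2)).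
set K' := a * c - c * a.
apply: (certify (Z := a*RA' - r^+4 *: (RA'*a) + r^+4 *: (c*RB') - RB'*c
   - r^+4 *: (b*b*K') + r^+4 *: (K'*b*b) + (m*r^+2) *: (b*b*K') - (m*r^+2) *: (b*K'*b))).
  by rewrite /RA' /RB' /K' RA RB K; rewrite ?(mul0r, mulr0, scaler0, addr0, add0r, oppr0, subr0).
rewrite subr0 /RA' /RB' /K' /m /qc; nc F [:: a; b; c]; repeat split; ring.
Qed.

Lemma T1a k d : (1 <= k)%N -> (k.+2 + d <= n)%N ->
  e k.+1 * Ep k (k.+2 + d) = Ep k (k.+2 + d) * e k.+1.
Proof.
move=> h1; elim: d => [|d IH] h2; first by rewrite addn0 B1 //; lia.
rewrite (@Eassoc k (k.+2 + d)); [|lia|lia|lia].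
rewrite addnS Eii; apply: qcC; first by apply: IH; lia.
by apply: hfar; lia.
Qed.

Lemma T1 i l j : (1 <= i)%N -> (i < l < j)%N -> (j <= n)%N -> e l * Ep i j = Ep i j * e l.
Proof.
move=> h1 h2 h3.
have [d hd] : exists d, l = (i + d.+1)%N by exists (l - i.+1)%N; lia.
subst l.
elim: d i h1 h2 => [|d IH] i h1 h2.
  have -> : j = (i.+2 + (j - i.+2))%N by lia.
  by rewrite addn1 T1a //; lia.
rewrite Erec; last by lia.
apply: qcC; first by symmetry; apply: hfar; lia.
by rewrite (_ : (i + d.+2 = i.+1 + d.+1)%N); [apply: IH; lia | lia].
Qed.

Lemma T3 i k l j : (1 <= i)%N -> (i < k <= l)%N -> (l < j <= n)%N ->
  Ep i j * Ep k l = Ep k l * Ep i j.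
Proof.
move=> *; apply: comm_E; first by lia.
by move=> m hm'; symmetry; apply: T1; lia.
Qed.

Lemma T5base i j : (1 <= i)%N -> (i < j <= n)%N -> e i * Ep i j = s^+2 *: (Ep i j * e i).
Proof.
move=> h1 h2; case: (ltngtP j i.+1) => hj; first by lia.
  rewrite (@Eassoc i i.+1) //; [|lia].
  rewrite -[s^+2]mulr1; apply: qcL; first by apply: hA; lia.
  by rewrite scale1r; apply: far_E; lia.
by rewrite hj hA //; lia.
Qed.

Lemma T4base i k : (1 <= i)%N -> (i <= k)%N -> (k.+2 <= n)%N ->
  Ep i k.+1 * e k.+1 = s^+2 *: (e k.+1 * Ep i k.+1).
Proof.
move=> h1 h2 h3; case: (ltngtP i k) => hk; [|by lia|].
  rewrite (@Eassoc i k.-1); [|lia|lia|lia].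
  rewrite prednK; last by lia.
  rewrite -[s^+2]mul1r; apply: qcR; last by apply: hB; lia.
  by rewrite scale1r; symmetry; apply: far_E'; lia.
by rewrite hk hB //; lia.
Qed.

Lemma T5 i l j : (1 <= i)%N -> (i <= l < j)%N -> (j <= n)%N ->
  Ep i l * Ep i j = s^+2 *: (Ep i j * Ep i l).
Proof.
move=> h1 h2 h3; case: (ltngtP i l) => hl; [|by lia|].
  rewrite (@Erec i l) //.
  rewrite -[s^+2]mulr1; apply: qcR; first by apply: T5base; lia.
  by rewrite scale1r; symmetry; apply: T3; lia.
by rewrite -hl Eii T5base //; lia.
Qed.

Lemma T4 i l j : (1 <= i)%N -> (i < l <= j)%N -> (j < n)%N ->
  Ep i j * Ep l j = s^+2 *: (Ep l j * Ep i j).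
Proof.
move=> h1 h2 h3.
have [k hk] : exists k, j = k.+1 by exists j.-1; lia.
subst j.
case: (ltngtP l k.+1) => hl; [|by lia|].
  rewrite (@Eassoc l k) ; [|lia|lia|lia].
  rewrite Eii -[s^+2]mul1r; apply: qcL; last by apply: T4base; lia.
  by rewrite scale1r; apply: T3; lia.
by rewrite hl Eii T4base //; lia.
Qed.

Lemma T2 i l j : (1 <= i)%N -> (i < l < j)%N -> (j <= n)%N ->
  Ep i l * Ep l j - (r * s) ^+ 2 *: (Ep l j * Ep i l) = (s ^+ 2 - r ^+ 2) *: (e l * Ep i j).
Proof.
move=> h1 h2 h3.
have [k hk] : exists k, l = k.+1 by exists l.-1; lia.
subst l.
have R1 := T5base (i:=k.+1) (j:=j) isT (ltac:(lia)).
have R2 := T1 (i:=i) (l:=k.+1) (j:=j) h1 (ltac:(lia)) h3.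
rewrite (@Eassoc i k j) in R2; [|lia|lia|lia].
rewrite (@Eassoc i k j); [|lia|lia|lia].
rewrite (@Eassoc i k k.+1); [|lia|lia|lia].
rewrite Eii.
move: R1 R2; set a := Ep i k; set b := e k.+1; set c := Ep k.+1 j.
move=> /eqP; rewrite -subr_eq0 => /eqP R1 /eqP; rewrite -subr_eq0 => /eqP R2.
apply: (certify (Z := a * (b * c - s^+2 *: (c * b)) - r^+4 *: ((b * c - s^+2 *: (c * b)) * a)
   - s^+2 *: (b * qc a c (r ^+ 2) - qc a c (r ^+ 2) * b))).
  by rewrite R1 R2; rewrite ?(mul0r, mulr0, scaler0, addr0, add0r, oppr0, subr0).
rewrite /qc; nc F [:: a; b; c]; repeat split; ring.
Qed.

Local Notation Ea := (E'aux n r s e).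

Lemma Ea0 i : Ea 0 i = qc (Ep i n) (e n) (r * s).
Proof. by []. Qed.
Lemma EaS k i : Ea k.+1 i = qc (Ea k i) (e (n - k.+1)) ((s^+2)^-1).
Proof. by []. Qed.

Lemma T6 i l k : (1 <= i)%N -> (i < l)%N -> (l.+2 + k <= n)%N -> e l * Ea k i = Ea k i * e l.
Proof.
move=> h1 h2; elim: k => [|k IH] h3.
  rewrite Ea0; apply: qcC; first by apply: T1; lia.
  by apply: hfar; lia.
rewrite EaS; apply: qcC; first by apply: IH; lia.
by apply: hfar; lia.
Qed.

Lemma T8 i k' l k : (1 <= i)%N -> (i < k' <= l)%N -> (l.+2 + k <= n)%N ->
  Ea k i * Ep k' l = Ep k' l * Ea k i.
Proof.
move=> h1 h2; elim: k => [|k IH] h3.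
  symmetry; rewrite Ea0; apply: qcC; first by symmetry; apply: T3; lia.
  by symmetry; apply: far_E'; lia.
symmetry; rewrite EaS; apply: qcC; first by symmetry; apply: IH; lia.
by symmetry; apply: far_E'; lia.
Qed.

Lemma T9 i l k : (1 <= i)%N -> (i <= l)%N -> (l.+2 + k <= n)%N ->
  Ep i l * Ea k i = s^+2 *: (Ea k i * Ep i l).
Proof.
move=> h1 h2; elim: k => [|k IH] h3.
  rewrite Ea0 -[s^+2]mulr1; apply: qcL; first by apply: T5; lia.
  by rewrite scale1r; symmetry; apply: far_E'; lia.
rewrite EaS -[s^+2]mulr1; apply: qcL; first by apply: IH; lia.
by rewrite scale1r; symmetry; apply: far_E'; lia.
Qed.

Lemma T7 i l k : (1 <= i)%N -> (i < l)%N -> (l.+2 + k <= n)%N ->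
  Ep i l * Ea k l - (r * s) ^+ 2 *: (Ea k l * Ep i l) = (s ^+ 2 - r ^+ 2) *: (e l * Ea k i).
Proof.
move=> h1 h2; elim: k => [|k IH] h3.
  rewrite !Ea0 qc_lin2; first last.
  - by symmetry; apply: far_E'; lia.
  - by symmetry; apply: far_E'; lia.
  rewrite T2; [|lia|lia|lia].
  rewrite qc_scale qc_mull //; by apply: hfar; lia.
rewrite !EaS qc_lin2; first last.
- by symmetry; apply: far_E'; lia.
- by symmetry; apply: far_E'; lia.
rewrite IH; last by lia.
rewrite qc_scale qc_mull //; by apply: hfar; lia.
Qed.
End Main.

Unset Implicit Arguments. Set Strict Implicit.

Section Conj.
Variables (F : fieldType) (A : algType F).
Lemma serre1 (w wi ei ej : A) pj : w * ej * wi = pj *: ej ->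
  iter 1 (adl ei w wi) ej = ei * ej - pj *: (ej * ei).
Proof. by move=> Hj; rewrite /= /adl Hj -scalerAl. Qed.
Lemma serre2 (w wi ei ej : A) pi pj : wi * w = 1 -> w * ei * wi = pi *: ei ->
  w * ej * wi = pj *: ej ->
  iter 2 (adl ei w wi) ej = ei * (ei * ej - pj *: (ej * ei))
     - (pi*pj) *: ((ei * ej - pj *: (ej * ei)) * ei).
Proof.
move=> hw Hi Hj.
have cwM : forall x y, w * (x * y) * wi = (w * x * wi) * (w * y * wi).
  by move=> x y; rewrite !mulrA -(mulrA _ wi w) hw mulr1.
have key : w * (ei * ej - pj *: (ej * ei)) * wi = (pi*pj) *: (ei * ej - pj *: (ej * ei)).
  rewrite mulrBr mulrBl -scalerAr -scalerAl !cwM Hi Hj.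
  rewrite -!scalerAl -!scalerAr !scalerA scalerBr scalerA.
  by rewrite (mulrC (pj * pj) pi) mulrA.
by rewrite /= /adl Hj -scalerAl key -scalerAl.
Qed.
End Conj.

Lemma se1 n i j : j != i.+1 -> i != j.+1 -> serre_exp n i j = 1%N.
Proof. by move=> h1 h2; rewrite /serre_exp (negbTE h1) (negbTE h2). Qed.
Lemma se_up n k : serre_exp n k k.+1 = 2%N.
Proof. by rewrite /serre_exp eqxx. Qed.
Lemma se_dn n k : k.+1 != n -> serre_exp n k.+1 k = 2%N.
Proof.
move=> h; rewrite /serre_exp (_ : (k == k.+2) = false); last by lia.
by rewrite eqxx (negbTE h).
Qed.

Section P.
Variables (F : fieldType) (n : nat) (r s : F).
Lemma p_far j i : (i.+1 < j)%N -> pairing n r s j i = 1.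
Proof.
move=> h; rewrite /pairing (_ : (j == i) = false); last by lia.
rewrite (_ : (i == j.+1) = false); last by lia.
by rewrite (_ : (j == i.+1) = false); last by lia.
Qed.
Lemma p_up k : (k < n)%N -> pairing n r s k.+1 k = s^+2.
Proof.
move=> h; rewrite /pairing (_ : (k.+1 == k) = false); last by lia.
rewrite (_ : (k == k.+2) = false); last by lia.
by rewrite eqxx h.
Qed.
Lemma p_dn k : (k < n)%N -> pairing n r s k k.+1 = (r^+2)^-1.
Proof.
move=> h; rewrite /pairing (_ : (k == k.+1) = false); last by lia.
by rewrite eqxx h.
Qed.
Lemma p_diag k : k != n -> pairing n r s k k = r^+2 / s^+2.
Proof. by move=> h; rewrite /pairing eqxx (negbTE h). Qed.
End P.

Theorem lemma3p3 (R : realType) (n : nat) (r s : R[i])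
  (hn : (2 <= n)%N) (hr : r != 0) (hs : s != 0)
  (h3 : r ^+ 3 != s ^+ 3) (h4 : r ^+ 4 != s ^+ 4)
  (A : algType R[i]) (e f w winv w' w'inv : nat -> A)
  (hU : Urs_relations n r s e f w winv w' w'inv) :
  let Ep := E r e in
  let Epp := E' n r s e in
  (forall i l j, (1 <= i)%N -> (i < l < j)%N -> (j <= n)%N ->
         e l * Ep i j = Ep i j * e l) /\
      (forall i l j, (1 <= i)%N -> (i < l < j)%N -> (j <= n)%N ->
         Ep i l * Ep l j - (r * s) ^+ 2 *: (Ep l j * Ep i l)
           = (s ^+ 2 - r ^+ 2) *: (e l * Ep i j)) /\
      (forall i k l j, (1 <= i)%N -> (i < k <= l)%N -> (l < j <= n)%N ->
         Ep i j * Ep k l = Ep k l * Ep i j) /\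
      (forall i l j, (1 <= i)%N -> (i < l <= j)%N -> (j < n)%N ->
         Ep i j * Ep l j = s ^+ 2 *: (Ep l j * Ep i j)) /\
      (forall i l j, (1 <= i)%N -> (i <= l < j)%N -> (j <= n)%N ->
         Ep i l * Ep i j = s ^+ 2 *: (Ep i j * Ep i l)) /\
      (forall i l j, (1 <= i)%N -> (i < l)%N -> (l.+1 < j <= n)%N ->
         e l * Epp i j = Epp i j * e l) /\
      (forall i l j, (1 <= i)%N -> (i < l)%N -> (l.+1 < j <= n)%N ->
         Ep i l * Epp l j - (r * s) ^+ 2 *: (Epp l j * Ep i l)
           = (s ^+ 2 - r ^+ 2) *: (e l * Epp i j)) /\
      (forall i k l j, (1 <= i)%N -> (i < k <= l)%N -> (l.+1 < j <= n)%N ->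
         Epp i j * Ep k l = Ep k l * Epp i j) /\
      (forall i l j, (1 <= i)%N -> (i <= l)%N -> (l.+1 < j <= n)%N ->
         Ep i l * Epp i j = s ^+ 2 *: (Epp i j * Ep i l)).
Proof.
move=> Ep Epp; rewrite {}/Ep {}/Epp.
case: hU => H1 H2 H3 H4 H5.
have hm : r^+2 + s^+2 != 0.
  apply: contra h4; rewrite addr_eq0 => /eqP H.
  by rewrite (_ : 4 = 2 * 2)%N // !exprM H sqrrN.
have hfar : forall i j, (1 <= i)%N -> (j <= n)%N -> (i.+1 < j)%N -> e i * e j = e j * e i.
  move=> i j hi hj hij.
  have [S _] := H5 i j (ltac:(lia)) (ltac:(lia)) (ltac:(lia)).
  have [C _ _ _] := H3 j i (ltac:(lia)) (ltac:(lia)).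
  rewrite se1 in S; [|lia|lia].
  rewrite (@serre1 _ _ _ _ _ _ _ C) p_far // scale1r in S.
  by apply/eqP; rewrite -subr_eq0 S.
have hA : forall k, (1 <= k)%N -> (k < n)%N ->
    e k * E r e k k.+1 = s^+2 *: (E r e k k.+1 * e k).
  move=> k h1 h2.
  have [S _] := H5 k k.+1 (ltac:(lia)) (ltac:(lia)) (ltac:(lia)).
  have [Cj _ _ _] := H3 k.+1 k (ltac:(lia)) (ltac:(lia)).
  have [Ci _ _ _] := H3 k k (ltac:(lia)) (ltac:(lia)).
  have [_ hw _ _] := H1 k (ltac:(lia)).
  rewrite se_up (@serre2 _ _ _ _ _ _ _ _ hw Ci Cj) p_up // p_diag in S; [|lia].
  rewrite (@Erec _ _ r s e hm k k.+1) // Eii.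
  apply: (certify S); rewrite /qc; nc R[i] [:: e k; e k.+1]; repeat split; field; by rewrite ?hr ?hs ?expf_neq0.
have hB : forall k, (1 <= k)%N -> (k.+2 <= n)%N ->
    E r e k k.+1 * e k.+1 = s^+2 *: (e k.+1 * E r e k k.+1).
  move=> k h1 h2.
  have [S _] := H5 k.+1 k (ltac:(lia)) (ltac:(lia)) (ltac:(lia)).
  have [Cj _ _ _] := H3 k k.+1 (ltac:(lia)) (ltac:(lia)).
  have [Ci _ _ _] := H3 k.+1 k.+1 (ltac:(lia)) (ltac:(lia)).
  have [_ hw _ _] := H1 k.+1 (ltac:(lia)).
  rewrite se_dn ?(@serre2 _ _ _ _ _ _ _ _ hw Ci Cj) ?p_dn ?p_diag in S; [|lia|lia|lia].
  rewrite (@Erec _ _ r s e hm k k.+1) // Eii.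
  have S' : (r^+2 * s^+2) *: (e k.+1 * (e k.+1 * e k - (r ^+ 2)^-1 *: (e k * e k.+1)) -
      (r ^+ 2 / s ^+ 2 * (r ^+ 2)^-1) *: ((e k.+1 * e k - (r ^+ 2)^-1 *: (e k * e k.+1)) * e k.+1)) = 0.
    by rewrite S scaler0.
  apply: (certify S'); rewrite /qc; nc R[i] [:: e k; e k.+1]; repeat split; field; by rewrite ?hr ?hs ?expf_neq0.
split; first by move=> *; apply: (T1 hm hfar hA hB); lia.
split; first by move=> *; apply: (T2 hm hfar hA hB); lia.
split; first by move=> *; apply: (T3 hm hfar hA hB); lia.
split; first by move=> *; apply: (T4 hm hfar hA hB); lia.
split; first by move=> *; apply: (T5 hm hfar hA hB); lia.
split; first by move=> *; rewrite /E'; apply: (T6 hm hfar hA hB); lia.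
split; first by move=> *; rewrite /E'; apply: (T7 hm hfar hA hB); lia.
split; first by move=> *; rewrite /E'; apply: (T8 hm hfar hA hB); lia.
by move=> *; rewrite /E'; apply: (T9 hm hfar hA hB); lia.
Qed.
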